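(* Let $Y$ be a sober space and let $X=\{y\in Y\mid \forall i\in I,\ y\in U_i\Rightarrow y\in V_i\}$ for some family $(U_i,V_i)_{i\in I}$ (of arbitrary cardinality) of pairs of open subsets of $Y$. Then $X$, with the subspace topology, is sober. In particular, every LCS-complete space is sober.
   Context: A space is sober if every irreducible closed subset is the closure of a unique point. A space is LCS-complete if it is homeomorphic to a $G_\delta$ subset (countable intersection of open sets), with the subspace topology, of some locally compact sober space, where locally compact means every point has a neighborhood base of compact saturated sets (no separation assumed). *)

(* Defs.v *)
From Stdlib Require Import List.

Definition is_topology {T : Type} (open : (T -> Prop) -> Prop) : Prop :=
  open (fun _ => True) /\
  (forall U V, open U -> open V -> open (fun x => U x /\ V x)) /\
  (forall F : (T -> Prop) -> Prop, (forall U, F U -> open U) ->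
     open (fun x => exists U, F U /\ U x)).

Definition closed {T : Type} (open : (T -> Prop) -> Prop) (C : T -> Prop) : Prop :=
  open (fun x => ~ C x).

Definition closure {T : Type} (open : (T -> Prop) -> Prop) (A : T -> Prop) (x : T) : Prop :=
  forall C, closed open C -> (forall y, A y -> C y) -> C x.

Definition irreducible {T : Type} (open : (T -> Prop) -> Prop) (C : T -> Prop) : Prop :=
  (exists x, C x) /\
  forall C1 C2, closed open C1 -> closed open C2 ->
    (forall x, C x -> C1 x \/ C2 x) ->
    (forall x, C x -> C1 x) \/ (forall x, C x -> C2 x).

Definition sober {T : Type} (open : (T -> Prop) -> Prop) : Prop :=
  forall C, closed open C -> irreducible open C ->
    exists x, (forall y, C y <-> closure open (fun z => z = x) y) /\
      (forall x', (forall y, C y <-> closure open (fun z => z = x') y) -> x' = x).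

Definition subspace_open {Y : Type} (open : (Y -> Prop) -> Prop) (P : Y -> Prop)
  (W : {y : Y | P y} -> Prop) : Prop :=
  exists U, open U /\ forall z, W z <-> U (proj1_sig z).

Definition saturated {T : Type} (open : (T -> Prop) -> Prop) (K : T -> Prop) : Prop :=
  forall y, (forall U, open U -> (forall k, K k -> U k) -> U y) -> K y.

Definition compact {T : Type} (open : (T -> Prop) -> Prop) (K : T -> Prop) : Prop :=
  forall F : (T -> Prop) -> Prop, (forall U, F U -> open U) ->
    (forall k, K k -> exists U, F U /\ U k) ->
    exists l : list (T -> Prop), (forall U, In U l -> F U) /\
      (forall k, K k -> exists U, In U l /\ U k).

Definition nbhd {T : Type} (open : (T -> Prop) -> Prop) (N : T -> Prop) (x : T) : Prop :=
  exists U, open U /\ U x /\ forall y, U y -> N y.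

Definition locally_compact {T : Type} (open : (T -> Prop) -> Prop) : Prop :=
  forall x N, nbhd open N x ->
    exists K, nbhd open K x /\ compact open K /\ saturated open K /\
      (forall y, K y -> N y).

Definition G_delta {T : Type} (open : (T -> Prop) -> Prop) (G : T -> Prop) : Prop :=
  exists W : nat -> T -> Prop, (forall n, open (W n)) /\
    forall y, G y <-> forall n, W n y.

Definition continuous {A B : Type} (openA : (A -> Prop) -> Prop)
  (openB : (B -> Prop) -> Prop) (f : A -> B) : Prop :=
  forall V, openB V -> openA (fun a => V (f a)).

Definition homeomorphic {A B : Type} (openA : (A -> Prop) -> Prop)
  (openB : (B -> Prop) -> Prop) : Prop :=
  exists (f : A -> B) (g : B -> A),
    (forall a, g (f a) = a) /\ (forall b, f (g b) = b) /\
    continuous openA openB f /\ continuous openB openA g.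

Definition LCS_complete {Z : Type} (openZ : (Z -> Prop) -> Prop) : Prop :=
  exists (Y : Type) (openY : (Y -> Prop) -> Prop) (G : Y -> Prop),
    is_topology openY /\ sober openY /\ locally_compact openY /\
    G_delta openY G /\ homeomorphic openZ (subspace_open openY G).

(* Main.v *)
Require Import Defs.
From Stdlib Require Import Classical FunctionalExtensionality PropExtensionality ProofIrrelevance.

Lemma open_ext {T : Type} (op : (T -> Prop) -> Prop) (U U' : T -> Prop) :
  op U -> (forall y, U y <-> U' y) -> op U'.
Proof.
  intros H E. replace U' with U; auto.
  apply functional_extensionality; intro y; apply propositional_extensionality; auto.
Qed.

Lemma closure_ext {T : Type} (op : (T -> Prop) -> Prop) (A B : T -> Prop) z :
  (forall y, A y <-> B y) -> closure op A z -> closure op B z.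
Proof.
  intros E H C HC HB. apply H; auto. intros y Ay; apply HB, E, Ay.
Qed.

Lemma closed_closure {T : Type} (op : (T -> Prop) -> Prop) (A : T -> Prop) :
  is_topology op -> closed op (closure op A).
Proof.
  intros [_ [_ Hu]]. unfold closed.
  set (F := fun W : T -> Prop => exists C, closed op C /\ (forall y, A y -> C y)
                 /\ forall x, W x <-> ~ C x).
  apply open_ext with (U := fun x => exists W, F W /\ W x).
  - apply Hu. intros W [C [HC [_ HW]]]. apply open_ext with (U := fun x => ~ C x); auto.
    intro y; rewrite HW; tauto.
  - intro x; split.
    + intros [W [[C [HC [HA HW]]] Wx]] Hcl. apply HW in Wx. apply Wx, Hcl; auto.
    + intro Hn. apply not_all_ex_not in Hn. destruct Hn as [C Hn].
      apply imply_to_and in Hn as [HC Hn]. apply imply_to_and in Hn as [HA Hn].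
      exists (fun x => ~ C x). split; auto. exists C; repeat split; auto.
Qed.

Lemma sub_closure {Y : Type} (openY : (Y -> Prop) -> Prop) (P : Y -> Prop)
  (A : {y : Y | P y} -> Prop) z :
  closure (subspace_open openY P) A z <->
  closure openY (fun w => exists c, A c /\ proj1_sig c = w) (proj1_sig z).
Proof.
  split.
  - intros H E HE HA. apply (H (fun z => E (proj1_sig z))).
    + exists (fun w => ~ E w). split; [exact HE| tauto].
    + intros c Ac. apply HA. eauto.
  - intros H C' [O [HO HOe]] HA.
    assert (HE : closed openY (fun w => ~ O w)).
    { unfold closed. apply open_ext with (U := O); auto. intro y; split; [tauto|apply NNPP]. }
    assert (~ O (proj1_sig z)).
    { apply H; auto. intros w [c [Ac <-]] Oc. apply HOe in Oc. apply Oc, HA, Ac. }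
    apply NNPP. intro Hn. apply HOe in Hn. tauto.
Qed.

Lemma sub_sober (Y : Type) (openY : (Y -> Prop) -> Prop) :
  is_topology openY -> sober openY ->
  forall (P : Y -> Prop) (I : Type) (U V : I -> Y -> Prop),
    (forall i, openY (U i)) -> (forall i, openY (V i)) ->
    (forall y, P y <-> forall i, U i y -> V i y) ->
    sober (subspace_open openY P).
Proof.
  intros HT HS P I U V HU HV HP C HC [[c0 Cc0] Hirr].
  set (D := closure openY (fun w => exists c, C c /\ proj1_sig c = w)).
  assert (HDc : closed openY D) by (apply closed_closure; auto).
  assert (HCD : forall c, C c -> D (proj1_sig c)).
  { intros c Cc E _ HE. apply HE; eauto. }
  assert (HDi : irreducible openY D).
  { split. { exists (proj1_sig c0); auto. }
    intros D1 D2 H1 H2 Hcov.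
    assert (Hsub : forall E, closed openY E -> closed (subspace_open openY P) (fun z => E (proj1_sig z))).
    { intros E HE. exists (fun w => ~ E w). split; [exact HE|tauto]. }
    destruct (Hirr _ _ (Hsub _ H1) (Hsub _ H2)) as [Hl|Hl].
    - intros x Cx. apply Hcov, HCD, Cx.
    - left. intros w Dw. apply Dw; auto. intros y [c [Cc <-]]. apply Hl, Cc.
    - right. intros w Dw. apply Dw; auto. intros y [c [Cc <-]]. apply Hl, Cc. }
  destruct (HS D HDc HDi) as [y [Hy Huniq]].
  assert (HyP : P y).
  { apply HP. intros i Ui. apply NNPP. intro nV.
    assert (Hc : exists c, C c /\ U i (proj1_sig c)).
    { apply NNPP. intro Hn.
      assert (HE : closed openY (fun w => ~ U i w)).
      { unfold closed. apply open_ext with (U := U i); auto. intro; split; [tauto|apply NNPP]. }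
      assert (Dy : D y) by (apply Hy; intros E _ HE'; apply HE'; reflexivity).
      apply (Dy _ HE); auto. intros w [c [Cc <-]] Uc. apply Hn; eauto. }
    destruct Hc as [c [Cc Uc]].
    assert (Vc : V i (proj1_sig c)) by (apply (proj1 (HP _) (proj2_sig c)); auto).
    assert (HE : closed openY (fun w => ~ V i w)).
    { unfold closed. apply open_ext with (U := V i); auto. intro; split; [tauto|apply NNPP]. }
    pose proof (proj1 (Hy _) (HCD c Cc)) as Hcd.
    apply (Hcd _ HE); auto. intros w ->; exact nV. }
  set (x := exist P y HyP).
  assert (Hclx : forall z, closure (subspace_open openY P) (fun z => z = x) z <->
                           closure openY (fun w => w = y) (proj1_sig z)).
  { intro z. rewrite sub_closure. split; apply closure_ext; intro w; split.
    - intros [c [-> <-]]; reflexivity.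
    - intros ->; exists x; auto.
    - intros ->; exists x; auto.
    - intros [c [-> <-]]; reflexivity. }
  assert (HCz : forall z, C z <-> D (proj1_sig z)).
  { intro z; split; [apply HCD|]. intro Dz. destruct HC as [O [HO HOe]].
    apply NNPP; intro nC. apply HOe in nC.
    assert (HE : closed openY (fun w => ~ O w)).
    { unfold closed. apply open_ext with (U := O); auto. intro; split; [tauto|apply NNPP]. }
    apply (Dz _ HE); auto. intros w [c [Cc <-]] Oc. apply HOe in Oc; auto. }
  exists x. split.
  - intro z. rewrite Hclx, HCz. apply Hy.
  - intros x' Hx'.
    assert (E1 : forall z, closure openY (fun w => w = y) (proj1_sig z) <->
                           closure (subspace_open openY P) (fun z => z = x') z).
    { intro z. rewrite <- Hx', HCz. symmetry. apply Hy. }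
    destruct x' as [y' Hy'].
    assert (Hxx : closure (subspace_open openY P) (fun z => z = exist P y' Hy') (exist P y' Hy'))
      by (intros E _ HE; apply HE; reflexivity).
    apply E1 in Hxx. simpl in Hxx.
    assert (Hyy : closure (subspace_open openY P) (fun z => z = exist P y' Hy') x).
    { apply E1. simpl. intros E _ HE; apply HE; reflexivity. }
    rewrite sub_closure in Hyy. simpl in Hyy.
    assert (Hyy' : closure openY (fun w => w = y') y).
    { revert Hyy. apply closure_ext. intro w; split.
      - intros [c [-> <-]]; reflexivity.
      - intros ->. exists (exist P y' Hy'); auto. }
    assert (y' = y).
    { apply Huniq. intro w. rewrite Hy. split.
      - intros Hw E HE Hsub. apply Hw; auto. intros u ->. apply Hyy'; auto.
      - intros Hw E HE Hsub. apply Hw; auto. intros u ->. apply Hxx; auto. }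
    subst y'. unfold x. f_equal. apply proof_irrelevance.
Qed.

Lemma homeo_sober {A B : Type} (openA : (A -> Prop) -> Prop) (openB : (B -> Prop) -> Prop) :
  homeomorphic openA openB -> sober openB -> sober openA.
Proof.
  intros [f [g [gf [fg [cf cg]]]]] HS.
  assert (pre_f : forall E, closed openB E -> closed openA (fun a => E (f a)))
    by (intros E HE; exact (cf _ HE)).
  assert (pre_g : forall E, closed openA E -> closed openB (fun b => E (g b)))
    by (intros E HE; exact (cg _ HE)).
  assert (Hcl : forall (S : A -> Prop) z, closure openA S z <-> closure openB (fun t => S (g t)) (f z)).
  { intros S z; split.
    - intros H E HE HS'. apply (H (fun a => E (f a))); auto.
      intros a Sa. apply HS'. rewrite gf; auto.
    - intros H E HE HS'. rewrite <- (gf z). apply (H (fun b => E (g b))); auto. }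
  intros C HC [[c0 Cc0] Hirr].
  set (C' := fun b => C (g b)).
  assert (HC' : closed openB C') by (apply pre_g; auto).
  assert (HCi : irreducible openB C').
  { split. { exists (f c0). unfold C'; rewrite gf; auto. }
    intros D1 D2 H1 H2 Hcov.
    destruct (Hirr _ _ (pre_f _ H1) (pre_f _ H2)) as [Hl|Hl].
    - intros x Cx. apply Hcov. unfold C'; rewrite gf; auto.
    - left. intros b Cb. rewrite <- (fg b). apply Hl, Cb.
    - right. intros b Cb. rewrite <- (fg b). apply Hl, Cb. }
  destruct (HS C' HC' HCi) as [s [Hs Hu]].
  exists (g s). split.
  - intro z. rewrite Hcl. split.
    + intro Cz. apply (closure_ext _ (fun w => w = s)).
      { intro w; split; [intros ->; auto| intro E; rewrite <- (fg w), E, fg; auto]. }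
      apply Hs. unfold C'; rewrite gf; auto.
    + intro H. assert (C' (f z)) as R.
      { apply Hs. revert H. apply closure_ext. intro w; split; [intro E; rewrite <- (fg w), E, fg; auto|intros ->; auto]. }
      unfold C' in R; rewrite gf in R; auto.
  - intros x' Hx'. rewrite <- (gf x'). f_equal. apply Hu. intro b.
    unfold C'. rewrite Hx', Hcl, fg. split; apply closure_ext; intro w; split.
    + intro E; rewrite <- (fg w), E; auto.
    + intros ->; auto.
    + intros ->; auto.
    + intro E; rewrite <- (fg w), E; auto.
Qed.

Theorem proposition7p1 :
  (forall (Y : Type) (openY : (Y -> Prop) -> Prop),
      is_topology openY -> sober openY ->
      forall (I : Type) (U V : I -> Y -> Prop),
        (forall i, openY (U i)) -> (forall i, openY (V i)) ->
        sober (subspace_open openY (fun y => forall i, U i y -> V i y)))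
  /\
  (forall (Z : Type) (openZ : (Z -> Prop) -> Prop),
      is_topology openZ -> LCS_complete openZ -> sober openZ).
Proof.
  split.
  - intros Y openY HT HS I U V HU HV. apply (sub_sober Y openY HT HS _ I U V HU HV). intro; reflexivity.
  - intros Z openZ _ [Y [openY [G [HT [HS [_ [[W [HW HG]] Hh]]]]]]].
    eapply homeo_sober; [exact Hh|].
    apply (sub_sober Y openY HT HS G nat (fun _ _ => True) W).
    + intros _; apply HT.
    + exact HW.
    + intro y. rewrite HG. firstorder.
Qed.
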